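(* Let $G$ be a LEF-group and let $\mathcal{C}$ be a concrete category with a terminal object and fibered products. Let $(A,a)$ be a pointed object of $\mathcal{C}$ such that $A$ is finite product Hopfian or finite product co-Hopfian. If $\tau,\sigma\in CA_{\mathcal{C}}(G,(A,a))$ satisfy $\sigma\circ\tau=\mathrm{Id}$, then $\tau\circ\sigma=\mathrm{Id}$.
   Context: A group $G$ is LEF if every finite subset $S\subset G$ admits an injective map $\varphi\colon S\to H$ into some finite group $H$ with $\varphi(ab)=\varphi(a)\varphi(b)$ whenever $a,b,ab\in S$. A concrete category is a category with a faithful functor to sets; objects and morphisms are identified with their underlying sets and maps. In a category, an object $A$ is Hopfian if every epimorphism $A\to A$ is an automorphism, co-Hopfian if every monomorphism $A\to A$ is an automorphism; $A$ is finite product Hopfian (resp. co-Hopfian) if $A^n$ is Hopfian (resp. co-Hopfian) for all $n\in\mathbb{N}$. For finite $E$, $A^E$ is the product over the terminal object $\varepsilon$ of copies of $A$ indexed by $E$. A pointed object is $(A,a)$ with $a\colon\varepsilon\to A$; a pointed morphism $(A,a)\to(B,b)$ is $f\colon A\to B$ with $f\circ a=b$; $A^E$ is pointed by $a^E$ with all components $a$. $G$ acts on $A^G$ by $(gc)(h)=c(g^{-1}h)$; a cellular automaton is a map $\tau\colon A^G\to A^G$ with $(\tau(c))(g)=\mu((g^{-1}c)|_M)$ for some finite $M\subset G$ and map $\mu\colon A^M\to A$. $CA_{\mathcal{C}}(G,(A,a))$ is the set of cellular automata admitting, for some finite memory set $M$, a local defining map that is the underlying map of a pointed morphism $(A^M,a^M)\to(A,a)$.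 *)

(* Defs.v *)
From mathcomp Require Import all_boot fingroup.
From Stdlib Require Import List.
Set Implicit Arguments.
Unset Strict Implicit.
Unset Printing Implicit Defensive.

Record abs_group := Group {
  gcar :> Type;
  gmul : gcar -> gcar -> gcar;
  gone : gcar;
  ginv : gcar -> gcar;
  gmulA : forall x y z, gmul x (gmul y z) = gmul (gmul x y) z;
  gmul1 : forall x, gmul gone x = x;
  gmulV : forall x, gmul (ginv x) x = gone }.

Definition LEF (G : abs_group) : Prop :=
  forall S : list G, exists (H : finGroupType) (phi : G -> H),
    (forall x y, In x S -> In y S -> phi x = phi y -> x = y) /\
    (forall x y, In x S -> In y S -> In (gmul x y) S ->
       phi (gmul x y) = (phi x * phi y)%g).

(* A concrete category: objects with underlying sets; morphisms are identified
   with their underlying maps (faithfulness), i.e. a class of maps closed under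
   identities and composition. *)
Record concrete_category := ConcreteCategory {
  cc_obj :> Type;
  carrier : cc_obj -> Type;
  hom : forall A B : cc_obj, (carrier A -> carrier B) -> Prop;
  hom_id : forall A : cc_obj, hom (fun x : carrier A => x);
  hom_comp : forall A B D (f : carrier A -> carrier B) (g : carrier B -> carrier D),
      hom f -> hom g -> hom (fun x => g (f x)) }.
Arguments hom {c A B} _.

Section Cat.
Variable C : concrete_category.

Definition is_terminal (t : C) : Prop :=
  forall A : C, exists! f : carrier A -> carrier t, hom f.

Definition is_pullback (A B D : C) (f : carrier A -> carrier D)
    (g : carrier B -> carrier D) (P : C)
    (p1 : carrier P -> carrier A) (p2 : carrier P -> carrier B) : Prop :=
  hom p1 /\ hom p2 /\ (forall x, f (p1 x) = g (p2 x)) /\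
  forall (Q : C) (q1 : carrier Q -> carrier A) (q2 : carrier Q -> carrier B),
    hom q1 -> hom q2 -> (forall y, f (q1 y) = g (q2 y)) ->
    exists! u : carrier Q -> carrier P,
      hom u /\ (forall y, p1 (u y) = q1 y) /\ (forall y, p2 (u y) = q2 y).

Definition has_terminal : Prop := exists t : C, is_terminal t.

Definition has_fibered_products : Prop :=
  forall (A B D : C) (f : carrier A -> carrier D) (g : carrier B -> carrier D),
    hom f -> hom g ->
    exists (P : C) (p1 : carrier P -> carrier A) (p2 : carrier P -> carrier B),
      @is_pullback A B D f g P p1 p2.

(* The forgetful functor preserves the terminal object and fibered products
   (so that objects A^E have underlying set the set of maps E -> A). *)
Definition forget_preserves_terminal : Prop :=
  forall t : C, is_terminal t -> exists x : carrier t, forall y, y = x.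

Definition forget_preserves_fibered_products : Prop :=
  forall (A B D : C) (f : carrier A -> carrier D) (g : carrier B -> carrier D)
    (P : C) (p1 : carrier P -> carrier A) (p2 : carrier P -> carrier B),
    hom f -> hom g -> @is_pullback A B D f g P p1 p2 ->
    (forall x y, p1 x = p1 y -> p2 x = p2 y -> x = y) /\
    (forall a b, f a = g b -> exists x, p1 x = a /\ p2 x = b).

Definition is_power (A : C) (E : Type) (P : C)
    (pi : E -> carrier P -> carrier A) : Prop :=
  (forall e, hom (pi e)) /\
  forall (Q : C) (q : E -> carrier Q -> carrier A), (forall e, hom (q e)) ->
    exists! u : carrier Q -> carrier P,
      hom u /\ forall e, (fun y => pi e (u y)) = q e.

Definition is_epi (A B : C) (f : carrier A -> carrier B) : Prop :=
  forall (D : C) (g h : carrier B -> carrier D), hom g -> hom h ->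
    (fun x => g (f x)) = (fun x => h (f x)) -> g = h.

Definition is_mono (A B : C) (f : carrier A -> carrier B) : Prop :=
  forall (D : C) (g h : carrier D -> carrier A), hom g -> hom h ->
    (fun x => f (g x)) = (fun x => f (h x)) -> g = h.

Definition is_automorphism (A : C) (f : carrier A -> carrier A) : Prop :=
  hom f /\ exists f' : carrier A -> carrier A,
    hom f' /\ (forall x, f' (f x) = x) /\ (forall x, f (f' x) = x).

Definition hopfian (A : C) : Prop :=
  forall f : carrier A -> carrier A, hom f -> is_epi f -> is_automorphism f.

Definition cohopfian (A : C) : Prop :=
  forall f : carrier A -> carrier A, hom f -> is_mono f -> is_automorphism f.

Definition finite_product_hopfian (A : C) : Prop :=
  forall (n : nat) (P : C) (pi : 'I_n -> carrier P -> carrier A),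
    is_power pi -> hopfian P.

Definition finite_product_cohopfian (A : C) : Prop :=
  forall (n : nat) (P : C) (pi : 'I_n -> carrier P -> carrier A),
    is_power pi -> cohopfian P.

(* CA_C(G,(A,a)), with eps a terminal object and a : eps -> A the point.
   The memory set is a finite subset M of G (a boolean predicate contained in a
   finite list); the index type of A^M is {g | M g}. *)
Definition CA_C (G : abs_group) (eps A : C) (a : carrier eps -> carrier A)
    (tau : (G -> carrier A) -> (G -> carrier A)) : Prop :=
  exists (M : G -> bool) (s : list G),
    (forall g, M g -> In g s) /\
    exists mu : ({g : G | M g} -> carrier A) -> carrier A,
      (forall (c : G -> carrier A) (g : G),
          tau c g = mu (fun m => c (gmul g (proj1_sig m)))) /\
      exists (P : C) (pi : {g : G | M g} -> carrier P -> carrier A)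
             (m : carrier P -> carrier A) (aM : carrier eps -> carrier P),
        is_power pi /\
        (forall x, m x = mu (fun e => pi e x)) /\
        hom m /\ hom aM /\
        (forall e y, pi e (aM y) = a y) /\
        (forall y, m (aM y) = a y).

End Cat.

(* Main.v *)
Require Import Defs.
From mathcomp Require Import all_boot fingroup.
From Stdlib Require Import List FunctionalExtensionality ClassicalEpsilon.
Set Implicit Arguments.
Unset Strict Implicit.

Section Pow.
Variable C : concrete_category.
Variable eps : C.
Hypothesis Heps : is_terminal eps.
Hypothesis Hfib : has_fibered_products C.
Hypothesis Hpterm : forget_preserves_terminal C.
Hypothesis Hpfib : forget_preserves_fibered_products C.
Variable A : C.

Definition good_power (E : Type) (P : C) (pi : E -> carrier P -> carrier A) :=
  is_power pi /\ forall d : E -> carrier A, exists x, forall e, pi e x = d e.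

Lemma pw_reindex E E' (P : C) (pi : E -> carrier P -> carrier A) (f : E' -> E) (g : E -> E') :
  (forall e, f (g e) = e) -> (forall e', g (f e') = e') ->
  good_power pi -> good_power (fun e' => pi (f e')).
Proof.
move=> fg gf [[Hpi Hu] Hs]; split; first split.
- by move=> e; apply: Hpi.
- move=> Q q Hq.
  have [u [[Hu1 Eu] uu]] := Hu Q (fun e => q (g e)) (fun e => Hq (g e)).
  exists u; split; first split=> //.
    by move=> e'; rewrite Eu gf.
  move=> v [Hv Ev]; apply: uu; split=> // e.
  by rewrite -Ev fg.
- move=> d; have [x Hx] := Hs (fun e => d (g e)).
  by exists x => e'; rewrite Hx gf.
Qed.

Lemma base (E : Type) (HE : E -> False) :
  exists pi : E -> carrier eps -> carrier A, good_power pi.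
Proof.
exists (fun e => False_rect _ (HE e)); split; first split.
- by move=> e; case: (HE e).
- move=> Q q Hq; have [t [ht ut]] := Heps Q.
  exists t; split.
    by split=> // e; case: (HE e).
  by move=> v [Hv _]; apply: ut.
- move=> d; have [x _] := Hpterm Heps; exists x => e; by case: (HE e).
Qed.

Lemma step E (P : C) (pi : E -> carrier P -> carrier A) : good_power pi ->
  exists (P' : C) (pi' : option E -> carrier P' -> carrier A), good_power pi'.
Proof.
move=> [[Hpi Hu] Hs].
have [tP [htP utP]] := Heps P. have [tA [htA utA]] := Heps A.
have [P' [p1 [p2 Hpb]]] := Hfib htP htA.
have [Hp1 [Hp2 [Hcomm Hpbu]]] := Hpb.
exists P', (fun o => match o with Some e => fun x => pi e (p1 x) | None => p2 end).
split; first split.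
- by case=> [e|] //; apply: hom_comp.
- move=> Q q Hq.
  have [uE [[HuE EuE] uniqE]] := Hu Q (fun e => q (Some e)) (fun e => Hq (Some e)).
  have Hc : forall y, tP (uE y) = tA (q None y).
    have [t [ht ut]] := Heps Q.
    have e1 := ut _ (hom_comp HuE htP). have e2 := ut _ (hom_comp (Hq None) htA).
    by move=> y; rewrite -(congr1 (fun f => f y) e1) -(congr1 (fun f => f y) e2).
  have [u [[Hu' [Hu1 Hu2]] uniq]] := Hpbu Q uE (q None) HuE (Hq None) Hc.
  exists u; split; first split=> //.
    case=> [e|]; apply: functional_extensionality => y /=.
      by rewrite Hu1 -(EuE e).
    by rewrite Hu2.
  move=> v [Hv Ev]; apply: uniq; split=> //.
  have Ep : (fun y => p1 (v y)) = uE.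
    apply: esym; apply: uniqE; split; first exact: hom_comp Hv Hp1.
    by move=> e; exact: (Ev (Some e)).
  split=> y; first by rewrite -Ep.
  by rewrite -(Ev None).
- move=> d; have [xE HxE] := Hs (fun e => d (Some e)).
  have [Hinj Hsurj] := Hpfib htP htA Hpb.
  have [t0 Ht0] := Hpterm Heps.
  have [x [E1 E2]] := Hsurj xE (d None) (etrans (Ht0 (tP xE)) (esym (Ht0 (tA _)))).
  by exists x; case=> [e|] /=; rewrite ?E1 ?HxE.
Qed.

Lemma pow_n n : exists (P : C) (pi : 'I_n -> carrier P -> carrier A), good_power pi.
Proof.
elim: n => [|n [P [pi Hp]]].
  have [pi Hpi] := @base 'I_0 (fun i => match i with Ordinal m Hm => ltac:(by rewrite ltn0 in Hm) end).
  by exists eps, pi.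
have [P' [pi' Hp']] := step Hp.
exists P'.
exists (fun i : 'I_n.+1 => pi' (unlift ord_max i)).
apply: (@pw_reindex _ _ _ pi' (unlift ord_max)
   (fun o => match o with Some j => lift ord_max j | None => ord_max end)) => //.
- by case=> [j|] /=; rewrite ?liftK ?unlift_none.
- by move=> i; case: unliftP.
Qed.

Lemma ca_map (E : Type) (P : C) (proj : E -> carrier P -> carrier A) (Hp : is_power proj)
  (M : Type) (mu : (M -> carrier A) -> carrier A) (PM : C) (piM : M -> carrier PM -> carrier A)
  (m : carrier PM -> carrier A) (HpM : is_power piM) (Hm : forall x, m x = mu (fun e => piM e x))
  (Hmh : hom m) (psi : E -> M -> E) :
  exists T : carrier P -> carrier P, hom T /\ forall h x, proj h (T x) = mu (fun e => proj (psi h e) x).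
Proof.
have [Hproj Hup] := Hp. have [_ HuM] := HpM.
have Hc : forall h, exists ch : carrier P -> carrier A, hom ch /\ forall x, ch x = mu (fun e => proj (psi h e) x).
  move=> h.
  have [u [[Hu Eu] _]] := HuM P (fun e => proj (psi h e)) (fun e => Hproj _).
  exists (fun x => m (u x)); split; first exact: hom_comp Hu Hmh.
  move=> x; rewrite Hm; congr mu; apply: functional_extensionality => e.
  exact: (congr1 (fun f => f x) (Eu e)).
pose ch h := proj1_sig (constructive_indefinite_description _ (Hc h)).
have Hch h : hom (ch h) /\ forall x, ch h x = mu (fun e => proj (psi h e) x).
  exact: proj2_sig (constructive_indefinite_description _ (Hc h)).
have [T [[HT ET] _]] := Hup P ch (fun h => (Hch h).1).
exists T; split=> // h x; rewrite -(Hch h).2.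
exact: (congr1 (fun f => f x) (ET h)).
Qed.

End Pow.
Lemma gmulV' (G : abs_group) (x : G) : gmul x (ginv x) = gone G.
Proof.
have E1 : gmul (ginv (ginv x)) (ginv x) = gone G by rewrite gmulV.
rewrite -[gmul x _]gmul1 -{1}E1 -gmulA (gmulA (ginv x)) gmulV gmul1.
exact: E1.
Qed.

Lemma gmul1r (G : abs_group) (x : G) : gmul x (gone G) = x.
Proof. by rewrite -(gmulV x) gmulA gmulV' gmul1. Qed.

Section Pick.
Variables (G : abs_group) (H : finGroupType) (phi : G -> H).
Fixpoint pickS (S : list G) (h : H) : option G :=
  match S with nil => None | y :: S' => if phi y == h then Some y else pickS S' h end.
Lemma pick_some S h y : pickS S h = Some y -> In y S /\ phi y = h.
Proof.
elim: S => //= z S IH; case: eqP => [E [<-]|_ /IH [? ?]]; by [split; [left|] | split; [right|]].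
Qed.
Lemma pick_none S y : In y S -> pickS S (phi y) <> None.
Proof.
elim: S => //= z S IH [->|Hy]; first by rewrite eqxx.
by case: eqP => // _; apply: IH.
Qed.
End Pick.

Theorem theorem6p1 (G : abs_group) (C : concrete_category)
    (HG : LEF G)
    (Hterm : has_terminal C) (Hfib : has_fibered_products C)
    (Hpterm : forget_preserves_terminal C)
    (Hpfib : forget_preserves_fibered_products C)
    (eps : C) (Heps : is_terminal eps)
    (A : C) (a : carrier eps -> carrier A) (Ha : hom a)
    (HA : finite_product_hopfian A \/ finite_product_cohopfian A)
    (tau sigma : (G -> carrier A) -> (G -> carrier A))
    (Htau : CA_C a tau) (Hsigma : CA_C a sigma)
    (Hst : forall c, sigma (tau c) = c) :
  forall c, tau (sigma c) = c.
Proof.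
have [Mt [st [HMt [mut [Heqt [Pt [pit [mt [aMt [Hpt [Hmt [Hmth _]]]]]]]]]]]] := Htau.
have [Ms [ss [HMs [mus [Heqs [Ps [pis [ms [aMs [Hps [Hms [Hmsh _]]]]]]]]]]]] := Hsigma.
pose l := st ++ ss.
pose S := gone G :: (l ++ flat_map (fun x => map (fun y => gmul x y) l) l).
have HS1 : In (gone G) S by left.
have HSl x : In x l -> In x S by move=> Hx; right; apply: in_or_app; left.
have HSt x : Mt x -> In x S by move=> /HMt Hx; apply: HSl; apply: in_or_app; left.
have HSs x : Ms x -> In x S by move=> /HMs Hx; apply: HSl; apply: in_or_app; right.
have HSm x y : In x l -> In y l -> In (gmul x y) S.
  move=> Hx Hy; right; apply: in_or_app; right; apply/in_flat_map.
  by exists x; split=> //; apply: in_map.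
have HSts x y : Mt x -> Ms y -> In (gmul x y) S.
  by move=> /HMt Hx /HMs Hy; apply: HSm; apply: in_or_app; [left|right].
have HSst x y : Ms x -> Mt y -> In (gmul x y) S.
  by move=> /HMs Hx /HMt Hy; apply: HSm; apply: in_or_app; [right|left].
have [H [phi [Hinj Hmul]]] := HG S.
have phi1 : phi (gone G) = 1%g.
  have E := Hmul _ _ HS1 HS1; rewrite gmul1 in E.
  by apply: (mulgI (phi (gone G))); rewrite mulg1 -E.
have [P [pi [Hpow Hsurj]]] := pow_n Heps Hfib Hpterm Hpfib A #|H|.
have [HpH HsH] := pw_reindex (f:=@enum_rank H) (fun e => enum_valK e) (fun e => enum_rankK e) (conj Hpow Hsurj).
set proj := (fun h : H => pi (enum_rank h)) in HpH HsH.
have [Tt [HTt ETt]] := ca_map HpH Hpt Hmt Hmth (fun h (e : {g : G | Mt g}) => (h * phi (proj1_sig e))%g).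
have [Ts [HTs ETs]] := ca_map HpH Hps Hms Hmsh (fun h (e : {g : G | Ms g}) => (h * phi (proj1_sig e))%g).
have HST : forall x, Ts (Tt x) = x.
  have [u [_ uu]] := HpH.2 P proj HpH.1.
  suff E : (fun x => Ts (Tt x)) = (fun x => x) by move=> x; exact: (congr1 (fun f => f x) E).
  rewrite -(uu (fun x => x)); last by split; [apply: hom_id | move=> e; apply: functional_extensionality].
  apply: esym; apply: uu; split; first exact: hom_comp HTt HTs.
  move=> h; apply: functional_extensionality => x.
  pose c := fun g => proj (h * phi g)%g x.
  have := congr1 (fun f => f (gone G)) (Hst c); rewrite /= Heqs.
  rewrite /c phi1 mulg1 => <-.
  rewrite ETs; congr mus; apply: functional_extensionality => e.
  rewrite ETt Heqt gmul1; congr mut; apply: functional_extensionality => e'.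
  case: e => [y py]; case: e' => [z pz] /=.
  by rewrite /c Hmul ?mulgA //; [apply: HSs | apply: HSt | apply: HSst].
have HTS : forall x, Tt (Ts x) = x.
  case: HA => [Hh|Hc].
  - have Hepi : is_epi Ts.
      move=> D g h0 Hg Hh0 E; apply: functional_extensionality => y.
      by rewrite -(HST y) (congr1 (fun f => f (Tt y)) E).
    have [_ [f' [_ [H1 H2]]]] := Hh _ _ _ Hpow Ts HTs Hepi.
    have Ef y : Tt y = f' y by rewrite -[Tt y]H1 HST.
    by move=> x; rewrite Ef H1.
  - have Hmono : is_mono Tt.
      move=> D g h0 Hg Hh0 E; apply: functional_extensionality => y.
      by rewrite -(HST (g y)) -(HST (h0 y)) (congr1 (fun f => f y) E).
    have [_ [f' [_ [H1 H2]]]] := Hc _ _ _ Hpow Tt HTt Hmono.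
    have Ef y : Ts y = f' y by rewrite -[y in Ts y]H2 HST.
    by move=> x; rewrite Ef H2.
move=> c; apply: functional_extensionality => g.
pose d := fun h => match pickS phi S h with Some y => c (gmul g y) | None => c g end.
have Hd y : In y S -> d (phi y) = c (gmul g y).
  move=> Hy; rewrite /d; case E: (pickS phi S (phi y)) => [z|]; last by have := @pick_none G H phi S y Hy.
  have [Hz Ez] := pick_some E; by rewrite (Hinj _ _ Hz Hy Ez).
have [x Hx0] := HsH d.
have Hx : forall e, proj e x = d e := Hx0.
have := congr1 (proj 1%g) (HTS x).
rewrite Hx -phi1 Hd // gmul1r => <-.
rewrite ETt Heqt; congr mut; apply: functional_extensionality => e.
rewrite ETs Heqs; congr mus; apply: functional_extensionality => e'.
case: e => [y py]; case: e' => [z pz] /=.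
rewrite phi1 mul1g -Hmul; [|by apply: HSt | by apply: HSs | by apply: HSts].
by rewrite Hx Hd ?gmulA //; apply: HSts.
Qed.
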